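(* Let $L$ be a compact convex subset of $\mathbb{R}^n$, and let $Q$ be a polytope in $\mathbb{R}^n$ having at most $d+1$ vertices, where $d < n$. Suppose that, for every $d$-dimensional linear subspace $\xi$, there exists $v \in \xi$ such that $Q_\xi + v \subseteq L_\xi$. Then there exists $v_0 \in \mathbb{R}^n$ such that $Q + v_0 \subseteq L$.
   Context: For a set $S\subseteq\mathbb{R}^n$ and a linear subspace $\xi$, $S_\xi$ denotes the orthogonal projection of $S$ onto $\xi$. *)

(* Defs.v *)
From HB Require Import structures.
From mathcomp Require Import all_boot all_order all_algebra.
From mathcomp Require Import all_classical all_reals all_analysis.
Import numFieldNormedType.Exports.
Set Implicit Arguments. Unset Strict Implicit. Unset Printing Implicit Defensive.
Import Order.TTheory GRing.Theory Num.Theory.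
Local Open Scope classical_set_scope.
Local Open Scope ring_scope.

Definition convexR (R : realType) (n : nat) (S : set 'rV[R]_n) : Prop :=
  forall x y t, S x -> S y -> 0 <= t <= 1 -> S (t *: x + (1 - t) *: y).

Definition conv_hull (R : realType) (n k : nat) (p : 'I_k -> 'rV[R]_n)
  : set 'rV[R]_n :=
  [set x | exists w : 'I_k -> R, (forall i, 0 <= w i) /\
     \sum_(i < k) w i = 1 /\ x = \sum_(i < k) w i *: p i].

Definition dotR (R : realType) (n : nat) (x y : 'rV[R]_n) : R := (x *m y^T) 0 0.

(* orthogonal projection S_xi of S onto the linear subspace xi = row space of U:
   the set of points p in xi such that x - p is orthogonal to xi for some x in S *)
Definition oproj (R : realType) (n : nat) (U : 'M[R]_n) (S : set 'rV[R]_n)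
  : set 'rV[R]_n :=
  [set q | exists2 x, S x & (q <= U)%MS /\
     (forall w : 'rV[R]_n, (w <= U)%MS -> dotR (x - q) w = 0)].

Definition translate (R : realType) (n : nat) (S : set 'rV[R]_n) (v : 'rV[R]_n)
  : set 'rV[R]_n := [set y + v | y in S].

(* Main.v *)
Require Import Defs.
From HB Require Import structures.
From mathcomp Require Import all_boot all_order all_algebra.
From mathcomp Require Import all_classical all_reals all_analysis.
From mathcomp Require Import ring lra zify.
Import numFieldNormedType.Exports.
Import Order.TTheory GRing.Theory Num.Theory.
Local Open Scope classical_set_scope.
Local Open Scope ring_scope.
Set Implicit Arguments.

Section Dot.
Context {R : realType} {n : nat}.
Implicit Types x y z : 'rV[R]_n.

Lemma dotE x y : dotR x y = \sum_i x 0 i * y 0 i.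
Proof. by rewrite /dotR !mxE; apply: eq_bigr => i _; rewrite mxE. Qed.

Lemma dotC x y : dotR x y = dotR y x.
Proof. by rewrite !dotE; apply: eq_bigr => i _; rewrite mulrC. Qed.

Lemma dotDl x y z : dotR (x + y) z = dotR x z + dotR y z.
Proof. by rewrite !dotE -big_split; apply: eq_bigr => i _; rewrite !mxE mulrDl. Qed.

Lemma dotDr x y z : dotR z (x + y) = dotR z x + dotR z y.
Proof. by rewrite ![dotR z _]dotC dotDl. Qed.

Lemma dotZl a x y : dotR (a *: x) y = a * dotR x y.
Proof. by rewrite !dotE mulr_sumr; apply: eq_bigr => i _; rewrite !mxE mulrA. Qed.

Lemma dotZr a x y : dotR y (a *: x) = a * dotR y x.
Proof. by rewrite ![dotR y _]dotC dotZl. Qed.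

Lemma dotNl x y : dotR (- x) y = - dotR x y.
Proof. by rewrite -scaleN1r dotZl mulN1r. Qed.

Lemma dotNr x y : dotR y (- x) = - dotR y x.
Proof. by rewrite ![dotR y _]dotC dotNl. Qed.

Lemma dotBl x y z : dotR (x - y) z = dotR x z - dotR y z.
Proof. by rewrite dotDl dotNl. Qed.

Lemma dotBr x y z : dotR z (x - y) = dotR z x - dotR z y.
Proof. by rewrite dotDr dotNr. Qed.

Lemma dot0l x : dotR 0 x = 0.
Proof. by rewrite dotE big1 // => i _; rewrite mxE mul0r. Qed.

Lemma dot0r x : dotR x 0 = 0.
Proof. by rewrite dotC dot0l. Qed.

Lemma dot_suml (I : Type) (s : seq I) (f : I -> 'rV[R]_n) y :
  dotR (\sum_(i <- s) f i) y = \sum_(i <- s) dotR (f i) y.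
Proof.
elim: s => [|a s IH]; first by rewrite !big_nil dot0l.
by rewrite !big_cons dotDl IH.
Qed.

Lemma dot_sumr (I : Type) (s : seq I) (f : I -> 'rV[R]_n) y :
  dotR y (\sum_(i <- s) f i) = \sum_(i <- s) dotR y (f i).
Proof. by rewrite dotC dot_suml; apply: eq_bigr => i _; rewrite dotC. Qed.

Lemma dot_ge0 x : 0 <= dotR x x.
Proof. by rewrite dotE sumr_ge0 // => i _; rewrite -expr2 sqr_ge0. Qed.

Lemma dot_eq0 x : dotR x x = 0 -> x = 0.
Proof.
rewrite dotE => /eqP; rewrite psumr_eq0 => [/allP H|i _]; last by rewrite -expr2 sqr_ge0.
apply/rowP => i; rewrite mxE; have := H i (mem_index_enum _).
by rewrite /= -expr2 sqrf_eq0 => /eqP.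
Qed.

End Dot.

Lemma rank_ext (F : fieldType) m n (A : 'M[F]_(m,n)) r :
  (\rank A <= r)%N -> (r <= n)%N -> exists U : 'M[F]_n, (A <= U)%MS /\ \rank U = r.
Proof.
elim: r => [|r IH] hA hr.
  exists 0; split; last by rewrite mxrank0.
  have : \rank A == 0%N by rewrite -leqn0.
  by rewrite mxrank_eq0 => /eqP ->; exact: sub0mx.
case: (ltngtP (\rank A) r.+1) hA => // [lt|eq] _.
  have [U [AU rU]] := IH lt (ltnW hr).
  have : ~~ (1%:M <= U)%MS by rewrite sub1mx /row_full rU (ltn_eqF hr).
  case/row_subPn => i Hi.
  exists (U + row i 1%:M)%MS; split; first exact: submx_trans AU (addsmxSl _ _).
  have lt2 : (U < U + row i 1%:M)%MS.
    rewrite ltmxE addsmxSl /=; apply: contra Hi => H.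
    exact: submx_trans (addsmxSr _ _) H.
  apply/eqP; rewrite eqn_leq; apply/andP; split; last by rewrite -rU rank_ltmx.
  apply: leq_trans (mxrank_adds_leqif _ _) _; rewrite -[X in (_ <= X)%N]addn1; apply: leq_add.
    by rewrite rU.
  exact: rank_leq_row.
by exists <<A>>%MS; rewrite !genmxE eq.
Qed.

Lemma oproj_ex (R : realType) n (U : 'M[R]_n) (x : 'rV[R]_n) :
  exists q, (q <= U)%MS /\ forall w, (w <= U)%MS -> dotR (x - q) w = 0.
Proof.
set B := row_base U.
set G := B *m B^T.
have Gu : G \in unitmx.
  rewrite -row_free_unit -kermx_eq0; apply/eqP/row_matrixP => i; rewrite row0.
  set y := row i (kermx G).
  have yG : y *m G = 0 by apply/sub_kermxP; rewrite row_sub.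
  have yB : y *m B = 0.
    apply: (@dot_eq0 R n); rewrite /dotR trmx_mul mulmxA -(mulmxA y) -/G yG.
    by rewrite mul0mx mxE.
  by apply/eqP; rewrite -(mulmx_free_eq0 _ (row_base_free U)) yB.
exists (x *m B^T *m invmx G *m B); split.
  by apply: submx_trans (submxMl _ _) _; rewrite eq_row_base.
move=> w; rewrite -(eq_row_base U) => /submxP [z ->].
have H0 : (x - x *m B^T *m invmx G *m B) *m B^T = 0.
  have E : x *m B^T *m invmx G *m B *m B^T = x *m B^T.
    by rewrite -(mulmxA _ B) -/G -(mulmxA _ (invmx G)) mulVmx // mulmx1.
  by rewrite mulmxBl E subrr.
by rewrite -/B /dotR (trmx_mul z) mulmxA H0 mul0mx mxE.
Qed.

Lemma convex_comb (R : realType) n (L : set 'rV[R]_n) k (w : 'I_k -> R)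
    (y : 'I_k -> 'rV[R]_n) :
  convexR L -> (forall i, 0 <= w i) -> \sum_i w i = 1 -> (forall i, L (y i)) ->
  L (\sum_i w i *: y i).
Proof.
move=> cL; elim: k w y => [|k IH] w y w0 w1 Ly.
  by move: w1; rewrite big_ord0 => /eqP; rewrite eq_sym oner_eq0.
rewrite big_ord_recl; rewrite big_ord_recl in w1.
set s := \sum_(i < k) w (lift ord0 i) in w1.
have s0 : 0 <= s by rewrite sumr_ge0.
have [s_eq0|s_gt0] := eqVneq s 0.
  have wz : forall i, w (lift ord0 i) = 0.
    move=> i; move/eqP: s_eq0; rewrite psumr_eq0 // => /allP H.
    by apply/eqP; apply: H; rewrite mem_index_enum.
  rewrite big1 ?addr0; last by move=> i _; rewrite wz scale0r.
  by move: w1; rewrite s_eq0 addr0 => ->; rewrite scale1r.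
have sp : 0 < s by rewrite lt_def s_gt0 s0.
pose z := \sum_(i < k) (w (lift ord0 i) / s) *: y (lift ord0 i).
have Lz : L z.
  apply: IH => //; first by move=> i; rewrite divr_ge0.
  by rewrite -mulr_suml mulfV.
have -> : \sum_(i < k) w (lift ord0 i) *: y (lift ord0 i) = s *: z.
  rewrite /z scaler_sumr; apply: eq_bigr => i _; rewrite scalerA.
  by rewrite mulrCA mulfV // mulr1.
have -> : s = 1 - w ord0 by rewrite -w1 addrC addKr.
apply: cL => //; rewrite w0 /= -w1 lerDl //.
Qed.

Lemma entry_cont (T : topologicalType) m n i j :
  continuous (fun M : 'M[T]_(m, n) => M i j).
Proof.
move=> M A /= HA.
exists (fun i' j' => if (i' == i) && (j' == j) then A else setT).
  by move=> i' j'; case: ifP => [/andP [/eqP -> /eqP ->] //|_]; exact: filterT.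
by move=> N /= /(_ i j); rewrite !eqxx.
Qed.

Lemma cont_sum (T : topologicalType) (K : numFieldType) (V : normedModType K)
    (I : Type) (s : seq I) (f : I -> T -> V) :
  (forall i, continuous (f i)) -> continuous (fun x => \sum_(i <- s) f i x).
Proof.
move=> cf; elim: s => [|a s IH].
  by under eq_fun do rewrite big_nil; exact: cst_continuous.
under eq_fun do rewrite big_cons.
by move=> x; apply: continuousD; [exact: cf|exact: IH].
Qed.

Lemma dot_cont (R : realType) n : continuous (fun x : 'rV[R]_n => dotR x x).
Proof.
under eq_fun do rewrite dotE.
apply: cont_sum => i x; apply: continuousM; exact: coord_continuous.
Qed.

Lemma quad_lemma (R : realFieldType) (c q : R) : 0 <= q ->
  (forall t, 0 < t <= 1 -> 0 <= 2 * t * c + t ^+ 2 * q) -> 0 <= c.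
Proof.
move=> q0 H; rewrite leNgt; apply/negP => c0.
have hqc : 0 < q - c by lra.
pose t := - c / (q - c).
have t0 : 0 < t by rewrite divr_gt0 // oppr_gt0.
have t1 : t <= 1 by rewrite ler_pdivrMr // mul1r; lra.
have E : t * (q - c) = - c by rewrite /t divfK // gt_eqF.
clearbody t.
have E2 : 2 * t * c + t ^+ 2 * q = t * c * (1 + t).
  have -> : t ^+ 2 * q = t * (t * q) by rewrite expr2 mulrA.
  have -> : t * q = t * c - c by rewrite -[LHS]addr0 -(subrr (t * c)) -E; ring.
  ring.
have := H t; rewrite t0 t1 E2 => /(_ isT).
move=> h.
have h2 : 0 < t * - c * (1 + t).
  by rewrite !mulr_gt0 // ?oppr_gt0 //; lra.
have h3 : t * c * (1 + t) = - (t * - c * (1 + t)) by ring.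
lra.
Qed.

Lemma dot_sq (R : realType) n (u v : 'rV[R]_n) :
  dotR (u + v) (u + v) = dotR u u + 2 * dotR u v + dotR v v.
Proof. rewrite dotDl !dotDr (dotC v u); ring. Qed.

Lemma mean_min (R : realType) n k (Z : 'I_k -> 'rV[R]_n) (m c : 'rV[R]_n) :
  \sum_j (Z j - m) = 0 ->
  \sum_j dotR (Z j - m) (Z j - m) <= \sum_j dotR (Z j - c) (Z j - c).
Proof.
move=> S0.
have -> : \sum_j dotR (Z j - c) (Z j - c) =
   \sum_j dotR (Z j - m) (Z j - m) + \sum_j (2 * dotR (Z j - m) (m - c))
   + \sum_(j < k) dotR (m - c) (m - c).
  rewrite -!big_split /=; apply: eq_bigr => j _.
  by rewrite -dot_sq addrA subrK.
rewrite -mulr_sumr -dot_suml S0 dot0l mulr0 addr0 lerDl.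
by apply: sumr_ge0 => j _; exact: dot_ge0.
Qed.
Unset Implicit Arguments.

Lemma pt_in_hull (R : realType) (n k : nat) (p : 'I_k -> 'rV[R]_n) i :
  conv_hull p (p i).
Proof.
exists (fun j => (j == i)%:R); split; first by move=> j; rewrite ler0n.
split; first by rewrite (bigD1 i) //= eqxx big1 ?addr0 // => j /negbTE ->.
rewrite (bigD1 i) //= eqxx scale1r big1 ?addr0 // => j /negbTE ->.
by rewrite scale0r.
Qed.

Lemma sum_center (R : realType) n k (Z : 'I_k -> 'rV[R]_n) : (0 < k)%N ->
  \sum_j (Z j - k%:R^-1 *: \sum_i Z i) = 0.
Proof.
move=> k0; rewrite sumrB sumr_const card_ord -scaler_nat scalerA mulfV ?scale1r ?subrr //.
by rewrite pnatr_eq0 -lt0n.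
Qed.

Theorem lemma2p6 (R : realType) (n d k : nat) (L : set 'rV[R]_n)
    (p : 'I_k -> 'rV[R]_n) :
  (d < n)%N -> compact L -> convexR L -> (0 < k <= d.+1)%N ->
  (forall U : 'M[R]_n, \rank U = d ->
     exists2 v, (v <= U)%MS &
       translate (oproj U (conv_hull p)) v `<=` oproj U L) ->
  exists v0 : 'rV[R]_n, translate (conv_hull p) v0 `<=` L.
Proof.
move=> dn cL convL /andP [k0 kd] Hyp.
have [l0 Ll0] : exists l, L l.
  have [U0 [_ rU0]] := @rank_ext R 1 n 0 d ltac:(by rewrite mxrank0) (ltnW dn).
  have [v _ Hv] := Hyp U0 rU0.
  have [q [qU qo]] := oproj_ex R U0 (p (Ordinal k0)).
  have : oproj U0 L (q + v).
    by apply: Hv; exists q => //; exists (p (Ordinal k0)) => //; exact: pt_in_hull.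
  by case=> x Lx _; exists x.
pose S := [set X : 'rV['rV[R]_n]_k | forall j, L (X ord0 j)].
have cS : compact S.
  have := @rV_compact _ k (fun _ => L) (fun _ => cL).
  move=> H. exact H.
have S0 : S !=set0 by exists (const_mx l0) => j; rewrite mxE.
pose yv (X : 'rV['rV[R]_n]_k) j := X ord0 j - p j.
pose mean (X : 'rV['rV[R]_n]_k) := k%:R^-1 *: \sum_j yv X j.
pose F X := \sum_j dotR (yv X j - mean X) (yv X j - mean X).
have cF : continuous F.
  apply: cont_sum => j X.
  apply: (@continuous_comp _ _ _ (fun X => yv X j - mean X) (fun x => dotR x x)); last exact: dot_cont.
  apply: continuousB; first by apply: continuousB; [exact: entry_cont|exact: cst_continuous].
  apply: continuousZl_tmp; apply: cont_sum => i Y.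
  by apply: continuousB; [exact: entry_cont|exact: cst_continuous].
have [X XS Xmin] := compact_EVT_min S0 cS (continuous_subspaceT cF).
have LX : forall j, L (X ord0 j) by move: XS; rewrite inE.
set m := mean X.
pose a j := yv X j - m.
have Sa : \sum_j a j = 0 by exact: sum_center _ _ _ _ k0.
have opt : forall j l, L l -> 0 <= dotR (a j) (l - X ord0 j).
  move=> j l Ll; set w := l - X ord0 j.
  apply: (@quad_lemma _ _ (dotR w w)) => [|t /andP [t0 t1]]; first exact: dot_ge0.
  pose X' : 'rV['rV[R]_n]_k := \row_i (if i == j then X ord0 j + t *: w else X ord0 i).
  have X'S : X' \in S.
    rewrite inE => i; rewrite mxE; case: ifP => _ //.
    have -> : X ord0 j + t *: w = t *: l + (1 - t) *: X ord0 j.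
      by rewrite /w scalerBr scalerBl scale1r addrCA.
    by apply: convL => //; rewrite t1 ltW.
  have := Xmin X' X'S.
  have := mean_min (yv X') m (sum_center _ _ _ (yv X') k0).
  rewrite -/(mean X') -/(F X').
  have E : \sum_i dotR (yv X' i - m) (yv X' i - m) =
     \sum_i dotR (a i) (a i) + (2 * t * dotR (a j) w + t ^+ 2 * dotR w w).
    rewrite (bigD1 j) //= [in RHS](bigD1 j) //=.
    have -> : yv X' j - m = a j + t *: w.
      by rewrite /a /yv mxE eqxx !(addrAC _ (t *: w)).
    have -> : \sum_(i < k | i != j) dotR (yv X' i - m) (yv X' i - m) =
              \sum_(i < k | i != j) dotR (a i) (a i).
      by apply: eq_bigr => i /negbTE ij; rewrite /a /yv mxE ij.
    rewrite dot_sq !dotZr !dotZl; ring.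
  have FXE : F X = \sum_i dotR (a i) (a i) by [].
  rewrite E FXE => h1 h2; lra.
case: (eqVneq (\sum_j dotR (a j) (a j)) 0) => [F0|Fpos].
  have a0 : forall j, a j = 0.
    move=> j; apply: dot_eq0; move/eqP: F0.
    rewrite psumr_eq0 => [/allP H|i _]; last exact: dot_ge0.
    by apply/eqP; apply: H; rewrite mem_index_enum.
  exists m => _ [x [w [w0 [w1 ->]]] <-].
  have -> : \sum_i w i *: p i + m = \sum_i w i *: (p i + m).
    rewrite (eq_bigr _ (fun i _ => scalerDr _ _ _)) big_split /=.
    by rewrite -scaler_suml w1 scale1r.
  apply: convex_comb => // i.
  have := a0 i; rewrite /a /yv => /eqP; rewrite subr_eq0 => /eqP <-.
  by rewrite addrC subrK.
exfalso.
pose A : 'M[R]_(k, n) := \matrix_j a j.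
have rA : (\rank A <= d)%N.
  pose one : 'rV[R]_k := const_mx 1.
  have K1 : one *m A = 0.
    apply/rowP => i; rewrite -Sa summxE mxE.
    by apply: eq_bigr => j _; rewrite !mxE mul1r.
  have : (\rank one <= \rank (kermx A))%N.
    by apply: mxrankS; apply/sub_kermxP.
  have nz : one != 0.
    apply/eqP => /rowP /(_ (Ordinal k0)); rewrite !mxE => /eqP; rewrite oner_eq0.
    by [].
  rewrite rank_rV mxrank_ker nz => h.
  have := rank_leq_row A.
  lia.
have [U [AU rU]] := @rank_ext R k n A d rA (ltnW dn).
have [v vU Hv] := Hyp U rU.
have aU : forall j, (a j <= U)%MS.
  move=> j; apply: submx_trans AU.
  have -> : a j = row j A by apply/rowP => i; rewrite !mxE.
  exact: row_sub.
have key : forall j, dotR (a j) (a j) + dotR (a j) m <= dotR (a j) v.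
  move=> j.
  have [q [qU qo]] := oproj_ex R U (p j).
  have : oproj U L (q + v).
    by apply: Hv; exists q => //; exists (p j) => //; exact: pt_in_hull.
  case=> l Ll [_ lo].
  have e1 := lo _ (aU j).
  have e2 := qo _ (aU j).
  have e3 := opt j l Ll.
  have XE : X ord0 j = a j + m + p j by rewrite /a /yv !subrK.
  clearbody a m; rewrite XE in e3.
  rewrite dotC in e1; rewrite dotC in e2.
  rewrite !dotBr !dotDr in e1 e2 e3.
  lra.
have := ler_sum (index_enum 'I_k) (fun j _ => key j).
move=> /(_ predT); rewrite big_split /= -!dot_suml Sa !dot0l addr0 => h.
have ge : 0 <= \sum_j dotR (a j) (a j) by apply: sumr_ge0 => j _; exact: dot_ge0.
by move/eqP: Fpos; apply; apply/le_anti; rewrite h ge.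
Qed.
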